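(* Let $B=B_1\circ B_2\circ\cdots\circ B_n$ be a composition of $n$ finite Blaschke products with $\deg B_j=k_j$ for $j=1,\dots,n$. Then $B$ has at most $\sum_{i=1}^n(k_i-1)$ distinct critical values.
   Context: A finite Blaschke product of degree $d$ is $B(z)=\gamma\prod_{j=1}^d \frac{z-a_j}{1-\overline{a_j}z}$ with $a_j\in\mathbb{D}$ and $|\gamma|=1$. The set of critical values of $B$ is $\{w\in\mathbb{D}: w=B(z)\text{ for some } z\in\mathbb{D} \text{ with } B'(z)=0\}$. *)

(* Defs.v *)
From Stdlib Require Import Reals List.
From Coquelicot Require Import Coquelicot.
Open Scope C_scope.

Definition in_disc (z : C) : Prop := (Cmod z < 1)%R.

Definition blaschke (g : C) (a : list C) : C -> C :=
  fun z => g * fold_right (fun aj acc => (z - aj) / (1 - Cconj aj * z) * acc) 1 a.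

Definition blaschke_data (g : C) (a : list C) : Prop :=
  Cmod g = 1%R /\ List.Forall in_disc a.

Definition blaschke_of (p : C * list C) : C -> C := blaschke (fst p) (snd p).

Definition bdeg (p : C * list C) : nat := length (snd p).

Definition compose_list (Bs : list (C * list C)) : C -> C :=
  fold_right (fun p f => fun z => blaschke_of p (f z)) (fun z => z) Bs.

Definition critical_point (f : C -> C) (z : C) : Prop :=
  is_derive (K := C_AbsRing) (V := C_NormedModule) f z (RtoC 0).

Definition critical_value (f : C -> C) (w : C) : Prop :=
  in_disc w /\ exists z, in_disc z /\ critical_point f z /\ w = f z.

(* Main.v *)
Require Import Defs.
From Stdlib Require Import Reals List Lra Lia Classical.
From Coquelicot Require Import Coquelicot.
Open Scope C_scope.

Notation CD f x l := (is_derive (K := C_AbsRing) (V := AbsRing_NormedModule C_AbsRing) f x l).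
Notation CDN f x l := (is_derive (K := C_AbsRing) (V := C_NormedModule) f x l).

Lemma bridge1 f x l : CD f x l -> CDN f x l.
Proof. intros [_ H]. split. apply (is_linear_scal_l (K := C_AbsRing) (V := C_NormedModule)).
  intros x' Hx' eps. exact (H x' Hx' eps). Qed.
Lemma bridge2 f x l : CDN f x l -> CD f x l.
Proof. intros [_ H]. split. apply (is_linear_scal_l (K := C_AbsRing)).
  intros x' Hx' eps. exact (H x' Hx' eps). Qed.


Lemma D_val f x a b : CD f x a -> a = b -> CD f x b.
Proof. intros H ->; exact H. Qed.

Lemma D_ext f g x a : (forall z, f z = g z) -> CD f x a -> CD g x a.
Proof. intros H; apply is_derive_ext; exact H. Qed.

Lemma D_id x : CD (fun z : C => z) x (RtoC 1).
Proof. pose proof (is_derive_id (K := C_AbsRing) x) as H. exact H. Qed.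

Lemma D_const (c : C) x : CD (fun _ => c) x (RtoC 0).
Proof. pose proof (is_derive_const (K := C_AbsRing) (V := AbsRing_NormedModule C_AbsRing) c x) as H. exact H. Qed.

Lemma D_plus f g x a b : CD f x a -> CD g x b -> CD (fun z => f z + g z) x (a + b).
Proof. intros Ha Hb. exact (is_derive_plus (K := C_AbsRing) (V := AbsRing_NormedModule C_AbsRing) f g x a b Ha Hb). Qed.

Lemma D_minus f g x a b : CD f x a -> CD g x b -> CD (fun z => f z - g z) x (a - b).
Proof. intros Ha Hb. exact (is_derive_minus (K := C_AbsRing) (V := AbsRing_NormedModule C_AbsRing) f g x a b Ha Hb). Qed.

Lemma D_mult f g x a b : CD f x a -> CD g x b -> CD (fun z => f z * g z) x (a * g x + f x * b).
Proof. intros Ha Hb.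
  exact (is_derive_mult (K := C_AbsRing) f g x a b Ha Hb Cmult_comm). Qed.

Lemma D_comp f g x a b : CD f (g x) a -> CD g x b -> CD (fun z => f (g z)) x (b * a).
Proof. intros Ha Hb. exact (is_derive_comp (K := C_AbsRing) (V := AbsRing_NormedModule C_AbsRing) f g x a b Ha Hb). Qed.

Lemma D_Cinv (w : C) : w <> 0 -> CD Cinv w (- / (w * w)).
Proof.
  intros Hw. split.
  - apply (is_linear_scal_l (K := C_AbsRing) (V := AbsRing_NormedModule C_AbsRing)).
  - intros x Hx. apply (is_filter_lim_locally_unique (K:=C_AbsRing) (V:=AbsRing_NormedModule C_AbsRing)) in Hx. subst x.
    intros eps.
    assert (HW : 0 < Cmod w) by (apply Cmod_gt_0; exact Hw).
    set (W := Cmod w) in *.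
    assert (Hd : 0 < Rmin (W / 2) (eps * (W * W * W) / 2)).
    { apply Rmin_pos. lra. destruct eps as [e He]; simpl. 
      apply Rmult_lt_0_compat; [|lra]. apply Rmult_lt_0_compat; [lra|]. 
      apply Rmult_lt_0_compat; [|lra]. apply Rmult_lt_0_compat; lra. }
    eapply filter_imp; [| exact (locally_ball_norm (K := C_AbsRing) (V := AbsRing_NormedModule C_AbsRing) w (mkposreal _ Hd))].
    intros y Hy. unfold ball_norm in Hy. simpl in Hy.
    change (norm (minus y w)) with (Cmod (minus y w)) in Hy. change (norm ?t) with (Cmod t).
    change (minus y w) with (y - w) in *.
    set (r := Cmod (y - w)) in *.
    assert (Hr1 : r < W / 2) by (eapply Rlt_le_trans; [exact Hy| apply Rmin_l]).
    assert (Hr2 : r < eps * (W * W * W) / 2) by (eapply Rlt_le_trans; [exact Hy| apply Rmin_r]).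
    assert (Hm : W - r <= Cmod y).
    { unfold r, W. pose proof (Cmod_triangle y (w - y)).
      replace (y + (w - y)) with w in H by ring.
      replace (w - y) with (- (y - w)) in H by ring. rewrite Cmod_opp in H. lra. }
    assert (Hy0 : @eq C y (RtoC 0) -> False).
    { intros ->. rewrite Cmod_0 in Hm. lra. }
    change (minus (minus (/ y) (/ w)) (scal (y - w) (- / (w * w)))) with
      (/ y - / w - (y - w) * (- / (w * w))).
    replace (/ y - / w - (y - w) * (- / (w * w))) with ((y - w) * (y - w) / (y * (w * w))) by (field; auto).
    rewrite Cmod_div by (apply Cmult_neq_0; auto; apply Cmult_neq_0; auto).
    rewrite !Cmod_mult. fold r W.
    set (m := Cmod y) in *.
    assert (Hr0 : 0 <= r) by apply Cmod_ge_0.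
    destruct eps as [e He]; simpl in *.
    apply (Rmult_le_reg_r (m * (W * W))).
    { apply Rmult_lt_0_compat; [lra| nra]. }
    unfold Rdiv. rewrite Rmult_assoc, Rinv_l by (apply Rgt_not_eq; apply Rmult_lt_0_compat; [lra|nra]).
    rewrite Rmult_1_r.
    assert (m * (W*W) >= W * W * W / 2) by nra.
    assert (r * r <= r * (e * (W * W * W) / 2)) by nra.
    nra.
Qed.


Definition Fb (l : list C) (z : C) : C := fold_right (fun aj acc => (z - aj) / (1 - Cconj aj * z) * acc) 1 l.
Definition Dn (l : list C) (z : C) : C := fold_right (fun a acc => (1 - Cconj a * z) * acc) 1 l.
Definition An (l : list C) (z : C) : C := fold_right (fun a acc => (z - a) * acc) 1 l.
Definition E (a z : C) : C := (z - a) * (1 - Cconj a * z).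
Definition Q (l : list C) (z : C) : C := fold_right (fun a acc => E a z * acc) 1 l.
Fixpoint Pl (l : list C) (z : C) : C :=
  match l with nil => 0 | a :: l' => (1 - a * Cconj a) * Q l' z + E a z * Pl l' z end.

Lemma blaschke_Fb g l z : blaschke g l z = g * Fb l z.
Proof. reflexivity. Qed.

Lemma nz_factor a z : in_disc a -> in_disc z -> 1 - Cconj a * z <> 0.
Proof.
  unfold in_disc. intros Ha Hz H.
  assert (Cconj a * z = 1). { transitivity (Cconj a * z + (1 - Cconj a * z)). rewrite H. ring. ring. }
  apply (f_equal Cmod) in H0. rewrite Cmod_mult, Cmod_conj, Cmod_1 in H0.
  pose proof (Cmod_ge_0 a). pose proof (Cmod_ge_0 z). nra.
Qed.

Lemma Dn_nz l z : List.Forall in_disc l -> in_disc z -> Dn l z <> 0.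
Proof.
  induction 1; intros Hz; simpl.
  - exact C1_nz.
  - apply Cmult_neq_0; auto. apply nz_factor; auto.
Qed.

Lemma Fb_eq l z : List.Forall in_disc l -> in_disc z -> Fb l z = An l z / Dn l z.
Proof.
  induction 1; intros Hz; simpl.
  - unfold Fb, An, Dn; simpl. field. 
  - unfold Fb in *; simpl. rewrite IHForall by auto. fold (An l z) (Dn l z).
    pose proof (nz_factor x z H Hz). pose proof (Dn_nz l z H0 Hz).
    field. auto.
Qed.

Lemma Q_eq l z : Q l z = An l z * Dn l z.
Proof.
  induction l; simpl. ring. unfold Q, An, Dn in *. simpl. rewrite IHl. unfold E. ring.
Qed.

Lemma D_mob a z : in_disc a -> in_disc z ->
  CD (fun t => (t - a) / (1 - Cconj a * t)) z ((1 - a * Cconj a) / ((1 - Cconj a * z) * (1 - Cconj a * z))).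
Proof.
  intros Ha Hz. pose proof (nz_factor a z Ha Hz) as Hn.
  eapply D_val.
  - apply D_mult.
    + apply D_minus. apply D_id. apply D_const.
    + apply (D_comp Cinv (fun t => 1 - Cconj a * t)).
      * apply D_Cinv. exact Hn.
      * apply D_minus. apply D_const. eapply D_val. apply D_mult. apply D_const. apply D_id. reflexivity.
  - simpl. field. exact Hn.
Qed.

Lemma D_Fb l z : List.Forall in_disc l -> in_disc z -> CD (Fb l) z (Pl l z / (Dn l z * Dn l z)).
Proof.
  induction 1; intros Hz.
  - eapply D_val. apply (D_ext (fun _ => RtoC 1)). reflexivity. apply D_const. simpl. field.
  - eapply D_val.
    + apply (D_ext (fun t => (t - x) / (1 - Cconj x * t) * Fb l t)). reflexivity.
      apply D_mult. apply D_mob; auto. apply IHForall; auto.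
    + rewrite (Fb_eq l z H0 Hz). simpl. fold (Dn l z). rewrite Q_eq.
      pose proof (nz_factor x z H Hz). pose proof (Dn_nz l z H0 Hz).
      unfold E. field. auto.
Qed.

Lemma D_blaschke g l z : List.Forall in_disc l -> in_disc z ->
  CD (blaschke g l) z (g * (Pl l z / (Dn l z * Dn l z))).
Proof.
  intros Hl Hz. eapply D_val.
  - apply (D_ext (fun t => g * Fb l t)). reflexivity.
    apply D_mult. apply D_const. apply D_Fb; auto.
  - simpl. ring.
Qed.


Fixpoint pf (n : nat) (f : C -> C) : Prop :=
  match n with
  | O => exists c, forall z, f z = c
  | S m => exists c g, pf m g /\ forall z, f z = c + z * g z
  end.

Lemma pf_ext n : forall f g, pf n f -> (forall z, f z = g z) -> pf n g.
Proof.
  induction n; simpl; intros f g H He.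
  - destruct H as [c Hc]. exists c. intros z. rewrite <- He. auto.
  - destruct H as [c [h [Hh Hf]]]. exists c, h. split; auto. intros z. rewrite <- He. auto.
Qed.

Lemma pf_const n (c : C) : pf n (fun _ => c).
Proof.
  revert c; induction n; simpl; intros c.
  - exists c. auto.
  - exists c, (fun _ => RtoC 0). split. apply IHn. intros; ring.
Qed.

Lemma pf_S n : forall f, pf n f -> pf (S n) f.
Proof.
  induction n; intros f H.
  - destruct H as [c Hc]. exists c, (fun _ => RtoC 0). split. exists (RtoC 0); auto.
    intros z; rewrite Hc; ring.
  - destruct H as [c [g [Hg Hf]]]. exists c, g. split; [apply IHn; auto | auto].
Qed.

Lemma pf_le n m f : (n <= m)%nat -> pf n f -> pf m f.
Proof. induction 1; auto. intros; apply pf_S; auto. Qed.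

Lemma pf_plus n : forall f g, pf n f -> pf n g -> pf n (fun z => f z + g z).
Proof.
  induction n; intros f g Hf Hg.
  - destruct Hf as [c Hc], Hg as [d Hd]. exists (c + d). intros; rewrite Hc, Hd; auto.
  - destruct Hf as [c [f1 [H1 E1]]], Hg as [d [g1 [H2 E2]]].
    exists (c + d), (fun z => f1 z + g1 z). split. apply IHn; auto.
    intros z; rewrite E1, E2; ring.
Qed.

Lemma pf_scal n : forall f (a : C), pf n f -> pf n (fun z => a * f z).
Proof.
  induction n; intros f a Hf.
  - destruct Hf as [c Hc]. exists (a * c). intros; rewrite Hc; auto.
  - destruct Hf as [c [f1 [H1 E1]]]. exists (a * c), (fun z => a * f1 z). split. apply IHn; auto.
    intros z; rewrite E1; ring.
Qed.

Lemma pf_mult n : forall m f g, pf n f -> pf m g -> pf (n + m) (fun z => f z * g z).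
Proof.
  induction n; intros m f g Hf Hg.
  - destruct Hf as [c Hc]. simpl. eapply pf_ext. apply (pf_scal m g c Hg). intros; rewrite Hc; auto.
  - destruct Hf as [c [f1 [H1 E1]]].
    eapply pf_ext.
    + apply pf_plus.
      * apply (pf_le m). lia. apply (pf_scal m g c Hg).
      * simpl. exists (RtoC 0), (fun z => f1 z * g z). split. apply IHn; auto. intros; reflexivity.
    + intros z. simpl. rewrite E1. ring.
Qed.

Lemma pf_lin (u v : C) f : (forall z, f z = u + v * z) -> pf 1 f.
Proof. intros H. exists u, (fun _ => v). split. exists v; auto. intros z; rewrite H; ring. Qed.

Lemma pf_E a : pf 2 (E a).
Proof.
  eapply pf_ext. apply (pf_mult 1 1).
  apply (pf_lin (- a) 1). intros; reflexivity.
  apply (pf_lin 1 (- Cconj a)). intros; reflexivity.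
  intros z. unfold E. ring.
Qed.

Lemma pf_Q l : pf (2 * length l) (Q l).
Proof.
  induction l.
  - exists (RtoC 1). intros; reflexivity.
  - change (length (a :: l)) with (S (length l)).
    replace (2 * S (length l))%nat with (2 + 2 * length l)%nat by lia.
    eapply pf_ext. apply pf_mult. apply pf_E. apply IHl. intros z; reflexivity.
Qed.

Lemma pf_P l : pf (2 * pred (length l)) (Pl l).
Proof.
  induction l.
  - simpl. exists (RtoC 0). intros; reflexivity.
  - destruct l as [|b l'].
    + simpl. exists (1 - a * Cconj a). intros z. unfold Q. simpl. ring.
    + change (pf (2 * S (length l')) (Pl (a :: b :: l'))).
      change (pf (2 * length l') (Pl (b :: l'))) in IHl.
      eapply pf_ext. apply pf_plus.
      * apply pf_scal. apply (pf_Q (b :: l')).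
      * replace (2 * S (length l'))%nat with (2 + 2 * length l')%nat by lia.
        apply pf_mult. apply pf_E. exact IHl.
      * intros z. reflexivity.
Qed.

Lemma pf_factor n : forall f, pf (S n) f -> forall r, exists h, pf n h /\ forall z, f z = f r + (z - r) * h z.
Proof.
  induction n; intros f Hf r.
  - destruct Hf as [c [g [[d Hd] Hf]]]. exists (fun _ => d). split. exists d; auto.
    intros z. rewrite !Hf, !Hd. ring.
  - destruct Hf as [c [g [Hg Hf]]].
    destruct (IHn g Hg r) as [h [Hh Eh]].
    exists (fun z => g r + z * h z). split.
    + exists (g r), h. split; auto.
    + intros z. rewrite !Hf. rewrite (Eh z). ring.
Qed.

Lemma pf_roots n : forall f l z0, pf n f -> NoDup l -> (forall r, In r l -> f r = 0) -> f z0 <> 0 ->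
  (length l <= n)%nat.
Proof.
  induction n; intros f l z0 Hf Hl Hr Hz.
  - destruct l as [|r l']. simpl; lia.
    exfalso. destruct Hf as [c Hc]. apply Hz. rewrite Hc, <- (Hc r). apply Hr. left; auto.
  - destruct l as [|r l']. simpl; lia.
    destruct (pf_factor n f Hf r) as [h [Hh Eh]].
    assert (Hfr : f r = 0) by (apply Hr; left; auto).
    inversion Hl; subst.
    simpl. apply le_n_S. apply (IHn h l' z0 Hh); auto.
    + intros s Hs. assert (f s = 0) by (apply Hr; right; auto).
      rewrite Eh, Hfr in H. assert (s - r <> 0).
      { apply Cminus_eq_contra. intros ->. contradiction. }
      assert (Heq : h s = / (s - r) * (0 + (s - r) * h s)) by (field; auto).
      rewrite Heq, H. ring.
    + intros H0. apply Hz. rewrite Eh, Hfr, H0. ring.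
Qed.


Definition rho (z : C) : C := / Cconj z.

Lemma Cconj_1 : Cconj 1 = 1.
Proof. unfold Cconj, RtoC; simpl. f_equal; ring. Qed.
Lemma Cconj_0 : Cconj 0 = 0.
Proof. unfold Cconj, RtoC; simpl. f_equal; ring. Qed.

Lemma Cconj_nz (z : C) : z <> 0 -> Cconj z <> 0.
Proof. intros Hz H. apply Hz. rewrite <- (Cconj_conj z), H. apply Cconj_0. Qed.

Lemma conj_rho (z : C) : z <> 0 -> Cconj (rho z) = / z.
Proof. intros Hz. unfold rho. rewrite Cinv_conj by (apply Cconj_nz; auto). rewrite Cconj_conj. reflexivity. Qed.

Lemma E_refl (a z : C) : z <> 0 -> Cconj (E a (rho z)) * (z * z) = E a z.
Proof.
  intros Hz. unfold E. rewrite Cmult_conj, !Cminus_conj, Cmult_conj, Cconj_1, conj_rho, Cconj_conj by auto.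
  field. auto.
Qed.

Lemma pow2S (z : C) n : z ^ (2 * S n) = z * z * z ^ (2 * n).
Proof. replace (2 * S n)%nat with (S (S (2 * n))) by lia. rewrite !Cpow_S. ring. Qed.

Lemma Q_refl l (z : C) : z <> 0 -> Cconj (Q l (rho z)) * z ^ (2 * length l) = Q l z.
Proof.
  intros Hz. induction l.
  - simpl. unfold Q; simpl. rewrite Cconj_1. apply Cmult_1_l.
  - change (length (a :: l)) with (S (length l)). rewrite pow2S.
    set (t := z ^ (2 * length l)) in *. 
    unfold Q in *; simpl. rewrite Cmult_conj.
    rewrite <- IHl, <- (E_refl a z Hz). ring.
Qed.

Lemma P_refl l (z : C) : z <> 0 -> Cconj (Pl l (rho z)) * z ^ (2 * length l) = z * z * Pl l z.
Proof.
  intros Hz. induction l.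
  - simpl. rewrite Cconj_0. ring.
  - change (length (a :: l)) with (S (length l)). rewrite pow2S. simpl Pl.
    set (t := z ^ (2 * length l)) in *.
    rewrite Cplus_conj, !Cmult_conj, Cminus_conj, Cconj_1, Cmult_conj, Cconj_conj.
    transitivity ((1 - a * Cconj a) * Q l z * (z * z) + E a z * (z * z * Pl l z)); [| ring].
    rewrite <- IHl, <- (Q_refl l z Hz), <- (E_refl a z Hz). fold t. ring.
Qed.

Lemma P_root_refl l (c : C) : c <> 0 -> Pl l c = 0 -> Pl l (rho c) = 0.
Proof.
  intros Hc H. pose proof (P_refl l c Hc) as HR. rewrite H, Cmult_0_r in HR.
  assert (Cconj (Pl l (rho c)) = 0).
  { assert (Hp : c ^ (2 * length l) <> 0) by (apply Cpow_nz; auto).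
    transitivity (Cconj (Pl l (rho c)) * c ^ (2 * length l) / c ^ (2 * length l)).
    field; auto. rewrite HR. field; auto. }
  rewrite <- (Cconj_conj (Pl l (rho c))), H0. apply Cconj_0.
Qed.

Lemma disc_comp (a : C) : in_disc a -> fst a * fst a + snd a * snd a < 1.
Proof.
  unfold in_disc. intros H. pose proof (Cmod2_alt a). pose proof (Cmod_ge_0 a).
  unfold Re, Im in H0. assert (Cmod a ^ 2 < 1) by nra. nra.
Qed.

Ltac csplit := unfold Cminus, Cplus, Copp, Cmult, Cconj, RtoC; simpl; apply injective_projections; simpl; ring.

Lemma Q_one l : List.Forall in_disc l -> exists q, Q l 1 = RtoC q /\ 0 < q.
Proof.
  induction 1.
  - exists 1%R. split. reflexivity. lra.
  - destruct IHForall as [q [Hq Hq0]]. pose proof (disc_comp x H) as Hx.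
    destruct x as [x1 x2]; simpl in Hx.
    exists (((1 - x1) * (1 - x1) + x2 * x2) * q)%R. split.
    + unfold Q in *; simpl. rewrite Hq. unfold E. csplit.
    + apply Rmult_lt_0_compat; [nra | auto].
Qed.

Lemma P_one l : List.Forall in_disc l -> exists p, Pl l 1 = RtoC p /\ (0 <= p)%R /\ (l <> nil -> 0 < p)%R.
Proof.
  induction 1.
  - exists 0%R. split. reflexivity. split. lra. intros H; congruence.
  - destruct IHForall as [p [Hp [Hp0 _]]]. destruct (Q_one l H0) as [q [Hq Hq0]].
    pose proof (disc_comp x H) as Hx.
    destruct x as [x1 x2]; simpl in Hx.
    exists ((1 - x1 * x1 - x2 * x2) * q + ((1 - x1) * (1 - x1) + x2 * x2) * p)%R. split.
    + simpl. rewrite Hp, Hq. unfold E. csplit.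
    + assert (0 < (1 - x1 * x1 - x2 * x2) * q)%R by (apply Rmult_lt_0_compat; nra).
      assert (0 <= ((1 - x1) * (1 - x1) + x2 * x2) * p)%R by (apply Rmult_le_pos; nra).
      split; intros; lra.
Qed.

Lemma P_one_nz l : List.Forall in_disc l -> l <> nil -> Pl l 1 <> 0.
Proof.
  intros H Hn. destruct (P_one l H) as [p [Hp [_ Hp0]]]. rewrite Hp.
  intros E0. apply RtoC_inj in E0. specialize (Hp0 Hn). lra.
Qed.

Lemma mob_lt (a z : C) : in_disc a -> in_disc z -> (Cmod ((z - a) / (1 - Cconj a * z)) < 1)%R.
Proof.
  intros Ha Hz. pose proof (nz_factor a z Ha Hz) as Hn.
  rewrite Cmod_div by auto.
  assert (Hp : (0 < Cmod (1 - Cconj a * z))%R) by (apply Cmod_gt_0; auto).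
  apply (Rmult_lt_reg_r (Cmod (1 - Cconj a * z))); auto.
  unfold Rdiv. rewrite Rmult_assoc, Rinv_l by lra. rewrite Rmult_1_r, Rmult_1_l.
  pose proof (disc_comp a Ha) as HA. pose proof (disc_comp z Hz) as HZ.
  assert (Cmod (z - a) ^ 2 < Cmod (1 - Cconj a * z) ^ 2)%R.
  { rewrite !Cmod2_alt. destruct a as [a1 a2], z as [z1 z2]; simpl in *.
    unfold Re, Im; simpl. 
    assert (0 < (1 - (a1 * a1 + a2 * a2)) * (1 - (z1 * z1 + z2 * z2)))%R by (apply Rmult_lt_0_compat; lra).
    nra. }
  pose proof (Cmod_ge_0 (z - a)). nra.
Qed.

Lemma Fb_bound l (z : C) : List.Forall in_disc l -> in_disc z ->
  (Cmod (Fb l z) <= 1)%R /\ (l <> nil -> Cmod (Fb l z) < 1)%R.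
Proof.
  induction 1; intros Hz.
  - unfold Fb; simpl. rewrite Cmod_1. split. lra. congruence.
  - destruct (IHForall Hz) as [H1 _]. unfold Fb in *; simpl. rewrite Cmod_mult.
    pose proof (mob_lt x z H Hz). pose proof (Cmod_ge_0 ((z - x) / (1 - Cconj x * z))).
    pose proof (Cmod_ge_0 (fold_right (fun aj acc : C => (z - aj) / (1 - Cconj aj * z) * acc) 1 l)).
    split; intros; nra.
Qed.

Lemma blaschke_disc (g : C) l (z : C) : Cmod g = 1%R -> List.Forall in_disc l -> l <> nil -> in_disc z ->
  in_disc (blaschke g l z).
Proof.
  intros Hg Hl Hn Hz. unfold in_disc. rewrite blaschke_Fb, Cmod_mult, Hg, Rmult_1_l.
  apply (Fb_bound l z Hl Hz); auto.
Qed.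


Definition nzb (c : C) : bool := if Ceq_dec c 0 then false else true.

Lemma filter_nz_id l : ~ In (RtoC 0) l -> filter nzb l = l.
Proof.
  induction l; simpl; intros H; auto. unfold nzb at 1. destruct (Ceq_dec a 0).
  - exfalso; apply H; left; auto.
  - rewrite IHl; auto.
Qed.

Lemma len_filter cs : NoDup cs -> (length cs <= S (length (filter nzb cs)))%nat.
Proof.
  induction 1; simpl; [lia|]. unfold nzb at 1. destruct (Ceq_dec x 0).
  - subst. rewrite filter_nz_id by auto. lia.
  - simpl. lia.
Qed.

Lemma rho_rho (c : C) : c <> 0 -> rho (rho c) = c.
Proof.
  intros Hc. unfold rho at 1. rewrite conj_rho by auto. field. auto.
Qed.

Lemma rho_nz (c : C) : c <> 0 -> rho c <> 0.
Proof.
  intros Hc H. unfold rho in H. apply (Cconj_nz c Hc).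
  transitivity (Cconj c * / Cconj c * Cconj c). field. apply Cconj_nz; auto.
  rewrite H. ring.
Qed.

Lemma rho_out (c : C) : c <> 0 -> in_disc c -> ~ in_disc (rho c).
Proof.
  unfold in_disc, rho. intros Hc Hd H. rewrite Cmod_inv in H by (apply Cconj_nz; auto).
  rewrite Cmod_conj in H. assert (0 < Cmod c)%R by (apply Cmod_gt_0; auto).
  assert (1 < / Cmod c)%R. { rewrite <- Rinv_1. apply Rinv_lt_contravar; lra. }
  lra.
Qed.

Lemma count_crit l : List.Forall in_disc l -> l <> nil -> forall cs, NoDup cs ->
  (forall c, In c cs -> in_disc c /\ Pl l c = 0) -> (length cs <= length l - 1)%nat.
Proof.
  intros Hl Hn cs Hnd Hcs.
  set (fs := filter nzb cs).
  assert (Hfs : forall c, In c fs -> In c cs /\ c <> 0).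
  { intros c Hc. unfold fs in Hc. apply filter_In in Hc. destruct Hc as [H1 H2].
    split; auto. unfold nzb in H2. destruct (Ceq_dec c 0); congruence. }
  assert (Hroots := pf_roots _ (Pl l) (cs ++ map rho fs) (RtoC 1) (pf_P l)).
  assert (Hlen : (length (cs ++ map rho fs) <= 2 * pred (length l))%nat).
  { apply Hroots.
    - apply NoDup_app; auto.
      + apply NoDup_map_NoDup_ForallPairs.
        * intros a b Ha Hb Hab. destruct (Hfs a Ha), (Hfs b Hb).
          rewrite <- (rho_rho a), <- (rho_rho b), Hab; auto.
        * apply NoDup_filter; auto.
      + intros a Ha Hb. apply in_map_iff in Hb. destruct Hb as [c [Hca Hc]].
        destruct (Hfs c Hc) as [Hc1 Hc2]. subst a.
        apply (rho_out c Hc2 (proj1 (Hcs c Hc1))). apply (proj1 (Hcs _ Ha)).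
    - intros r Hr. apply in_app_or in Hr. destruct Hr as [Hr|Hr].
      + apply (Hcs r Hr).
      + apply in_map_iff in Hr. destruct Hr as [c [Hca Hc]]. subst r.
        destruct (Hfs c Hc) as [Hc1 Hc2]. apply P_root_refl; auto. apply (Hcs c Hc1).
    - apply P_one_nz; auto. }
  rewrite length_app, length_map in Hlen.
  pose proof (len_filter cs Hnd). fold fs in H.
  destruct l; [congruence|]. simpl in *. lia.
Qed.

Lemma max_list (Sp : C -> Prop) N : (forall cs, NoDup cs -> (forall c, In c cs -> Sp c) -> (length cs <= N)%nat) ->
  exists cs, (length cs <= N)%nat /\ forall c, Sp c -> In c cs.
Proof.
  intros HN.
  destruct (classic (exists cs, NoDup cs /\ (forall c, In c cs -> Sp c) /\ forall c, Sp c -> In c cs))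
    as [[cs [H1 [H2 H3]]]|Hn].
  - exists cs. split; auto.
  - exfalso.
    assert (forall n, exists cs, NoDup cs /\ (forall c, In c cs -> Sp c) /\ length cs = n).
    { induction n.
      - exists nil. split. constructor. split. simpl; tauto. reflexivity.
      - destruct IHn as [cs [H1 [H2 H3]]].
        assert (exists c, Sp c /\ ~ In c cs).
        { apply NNPP. intros Hc. apply Hn. exists cs. split; auto. split; auto.
          intros c Sc. apply NNPP. intros Hi. apply Hc. exists c; auto. }
        destruct H as [c [Sc Hi]]. exists (c :: cs). split. constructor; auto.
        split. intros d [->|Hd]; auto. simpl; lia. }
    destruct (H (S N)) as [cs [H1 [H2 H3]]]. specialize (HN cs H1 H2). lia.
Qed.

Lemma crit_list (g : C) l : List.Forall in_disc l -> l <> nil ->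
  exists s, (length s <= length l - 1)%nat /\ forall c, in_disc c -> Pl l c = 0 -> In (blaschke g l c) s.
Proof.
  intros Hl Hn.
  destruct (max_list (fun c => in_disc c /\ Pl l c = 0) (length l - 1)) as [cs [H1 H2]].
  { intros cs Hnd Hcs. apply count_crit; auto. }
  exists (map (blaschke g l) cs). split. rewrite length_map; auto.
  intros c Hc Hp. apply in_map. apply H2; auto.
Qed.

Lemma D_unique f z (a b : C) : CD f z a -> CD f z b -> a = b.
Proof.
  intros Ha Hb. apply bridge1 in Ha. apply bridge1 in Hb.
  rewrite <- (is_C_derive_unique f z a Ha). apply is_C_derive_unique. exact Hb.
Qed.

Definition cond (p : C * list C) : Prop := blaschke_data (fst p) (snd p) /\ (1 <= bdeg p)%nat.

Lemma comp_props Bs : List.Forall cond Bs ->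
  forall z, in_disc z -> in_disc (compose_list Bs z) /\ exists d, CD (compose_list Bs) z d.
Proof.
  induction 1; intros z Hz.
  - split. exact Hz. exists (RtoC 1). apply D_id.
  - destruct H as [[Hg Hl] Hk]. destruct (IHForall z Hz) as [Hw [d Hd]].
    assert (Hn : snd x <> nil) by (intros E0; unfold bdeg in Hk; rewrite E0 in Hk; simpl in Hk; lia).
    split.
    + apply blaschke_disc; auto.
    + eexists. apply (D_comp (blaschke_of x) (compose_list l)).
      * apply D_blaschke; auto.
      * exact Hd.
Qed.

Lemma main Bs : List.Forall cond Bs ->
  exists s : list C,
    (length s <= fold_right (fun p acc => (bdeg p - 1) + acc) 0 Bs)%nat /\
    forall z, in_disc z -> CD (compose_list Bs) z (RtoC 0) -> In (compose_list Bs z) s.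
Proof.
  induction 1.
  - exists nil. split. simpl; lia. intros z Hz Hd. exfalso. apply C1_nz.
    apply (D_unique (fun t => t) z). apply D_id. exact Hd.
  - destruct IHForall as [sB [HlB HsB]].
    pose proof H as Hx. destruct H as [[Hg Hl] Hk].
    assert (Hn : snd x <> nil) by (intros E0; unfold bdeg in Hk; rewrite E0 in Hk; simpl in Hk; lia).
    destruct (crit_list (fst x) (snd x) Hl Hn) as [sp [Hlp Hsp]].
    exists (sp ++ map (blaschke_of x) sB). split.
    + rewrite length_app, length_map. simpl. unfold bdeg at 1. lia.
    + intros z Hz Hd.
      destruct (comp_props l H0 z Hz) as [Hw [dg Hdg]].
      set (w := compose_list l z) in *.
      assert (Hc := D_comp (blaschke_of x) (compose_list l) z _ dg (D_blaschke (fst x) (snd x) w Hl Hw) Hdg).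
      pose proof (D_unique _ z _ _ Hd Hc) as E0.
      destruct (Ceq_dec dg 0) as [Hdg0|Hdg0].
      * apply in_or_app. right. change (In (blaschke_of x w) (map (blaschke_of x) sB)). apply in_map. apply HsB; auto. subst w. rewrite <- Hdg0. exact Hdg.
      * apply in_or_app. left. change (In (blaschke (fst x) (snd x) w) sp). apply Hsp; auto.
        assert (Hg0 : fst x <> 0). { intros E1. rewrite E1, Cmod_0 in Hg. lra. }
        pose proof (Dn_nz (snd x) w Hl Hw) as HD.
        set (P := Pl (snd x) w) in *. set (D := Dn (snd x) w) in *.
        transitivity (/ dg * (dg * (fst x * (P / (D * D)))) * (D * D) / fst x).
        field. repeat split; auto.
        rewrite <- E0. field. repeat split; auto.
Qed.

Theorem proposition4p3 (Bs : list (C * list C)) :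
  List.Forall (fun p => blaschke_data (fst p) (snd p) /\ (1 <= bdeg p)%nat) Bs ->
  exists s : list C,
    (length s <= fold_right (fun p acc => (bdeg p - 1) + acc) 0 Bs)%nat /\
    forall w, critical_value (compose_list Bs) w -> In w s.
Proof.
  intros H. destruct (main Bs H) as [s [Hl Hs]]. exists s. split; auto.
  intros w [Hw [z [Hz [Hc ->]]]]. apply Hs; auto. apply bridge2. exact Hc.
Qed.
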